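(* Let $G=(V,E)$ be a graph with $n$ vertices and let $f_0, f_t$ be token-placements of $G$ with $f_0 \simeq f_t$. Then $\mathrm{OPT}(f_0,f_t) \le \binom{n}{2}$.
   Context: Graphs are finite, simple and undirected; $n=|V|$. Let $C=\{1,\dots,c\}$ be a set of colors. A token-placement of $G$ is a surjective map $f\colon V\to C$ ($f(v)$ is the color of the token on $v$). Two distinct token-placements $f,f'$ are adjacent if there is an edge $uv\in E$ with $f'(u)=f(v)$, $f'(v)=f(u)$ and $f'(w)=f(w)$ for all $w\in V\setminus\{u,v\}$ (i.e. $f'$ arises from $f$ by swapping the tokens on the adjacent vertices $u,v$). A swapping sequence between $f$ and $f'$ is a sequence $f_1=f,f_2,\dots,f_h=f'$ of token-placements in which $f_{k-1}$ and $f_k$ are adjacent for all $k$; its length is $h-1$. $\mathrm{OPT}(f,f')$ denotes the minimum length of a swapping sequence between $f$ and $f'$ ($\infty$ if none exists). We write $f\simeq f'$ if for every connected component $K$ of $G$ and every color $i$, the number of vertices of $K$ with $f$-color $i$ equals the number with $f'$-color $i$. *)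

(* Defs.v *)
From mathcomp Require Import all_boot.
Set Implicit Arguments. Unset Strict Implicit. Unset Printing Implicit Defensive.

Definition simple_graph (T : finType) (e : rel T) : Prop :=
  symmetric e /\ irreflexive e.

(* Colours C = {1,..,c} are represented by 'I_c = {0,..,c-1}. *)
Definition placement (T : finType) (c : nat) := {ffun T -> 'I_c}.

Definition token_placement (T : finType) (c : nat) (f : placement T c) : bool :=
  [forall i : 'I_c, exists v : T, f v == i].

Definition swap_adj (T : finType) (e : rel T) (c : nat) : rel (placement T c) :=
  fun f f' =>
    (f != f') &&
    [exists u : T, exists v : T,
      [&& e u v, f' u == f v, f' v == f u &
          [forall w : T, (w != u) && (w != v) ==> (f' w == f w)]]].

(* A swapping sequence f_1 = f, f_2, ..., f_h = f' is f :: s with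
   last f s = f'; all members are token-placements and consecutive ones
   are adjacent. Its length is h - 1 = size s. *)
Definition swapping_seq (T : finType) (e : rel T) (c : nat)
    (f f' : placement T c) (s : seq (placement T c)) : Prop :=
  [/\ all (@token_placement T c) (f :: s), path (@swap_adj T e c) f s & last f s = f'].

(* OPT(f,f') <= k : there is a swapping sequence between f and f' of length
   at most k (OPT is the minimum such length). *)
Definition OPT_le (T : finType) (e : rel T) (c : nat)
    (f f' : placement T c) (k : nat) : Prop :=
  exists s, @swapping_seq T e c f f' s /\ size s <= k.

Definition same_comp_counts (T : finType) (e : rel T) (c : nat)
    (f f' : placement T c) : Prop :=
  forall (u : T) (i : 'I_c),
    #|[set v | connect e u v & f v == i]| = #|[set v | connect e u v & f' v == i]|.

(* Main.v *)
Require Import Defs.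
From mathcomp Require Import all_boot fingroup perm.
Set Implicit Arguments. Unset Strict Implicit. Unset Printing Implicit Defensive.

Section NonCut.
Variables (T : finType) (R : rel T) (r : T).

Definition Pd (w : T) : pred nat := fun n =>
  ~~ connect R r w || [exists t : n.-tuple T, path R r t && (last r t == w)].

Lemma exPd w : exists n, Pd w n.
Proof.
rewrite /Pd; case: (boolP (connect R r w)) => /= [|_]; last by exists 0.
move/connectP=> [p pp ->]; exists (size p); apply/existsP.
by exists (in_tuple p); rewrite /= pp eqxx.
Qed.

Definition dist w := ex_minn (exPd w).

Definition Rm (v : T) := [rel x y | R x y && (x != v) && (y != v)].

Lemma noncut : exists v, connect R r v /\
  forall w, connect R r w -> w != v -> connect (Rm v) r w.
Proof.
have r0 : r \in connect R r by rewrite inE connect0.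
case: (arg_maxnP dist r0) => u ru umax; exists u; split => //.
suff H : forall m w, dist w < m -> connect R r w -> w != u -> connect (Rm u) r w.
  by move=> w rw wu; apply: (H (dist w).+1).
elim=> // m IH w dm rw wu.
have hu : dist w <= dist u := umax w rw.
move: dm hu; rewrite /dist; case: (ex_minnP (exPd w)) => d.
rewrite /Pd => /orP[/negP[] //|/existsP[t /andP[pt lt]]] dmin dm hu.
have st := size_tuple t.
move: st pt lt; case/lastP: (tval t) => [_ _ /= /eqP <-|t' z st]; first exact: connect0.
rewrite rcons_path last_rcons => /andP[pt' Rz] /eqP zw; subst z.
have rw' : connect R r (last r t') by apply/connectP; exists t'.
have dw' : dist (last r t') < d.
  rewrite /dist; case: (ex_minnP (exPd (last r t'))) => d' _ /(_ (size t')) H.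
  have : size t' < d by rewrite -st size_rcons.
  apply: leq_ltn_trans; apply: H; apply/orP; right; apply/existsP.
  by exists (in_tuple t'); rewrite /= pt' eqxx.
have w'u : last r t' != u.
  apply/negP => /eqP e'; have := leq_trans dw' hu; rewrite e' ltnn //.
apply: connect_trans (IH _ (leq_trans dw' dm) rw' w'u) _.
by apply: connect1; rewrite /= Rz w'u wu.
Qed.
End NonCut.

Section Move.
Variables (T : finType) (e : rel T) (c : nat).
Hypothesis esym : symmetric e.

Definition eS (S : {set T}) := [rel x y | e x y && (x \in S) && (y \in S)].

Lemma eS_sym S : symmetric (eS S).
Proof. by move=> x y; rewrite /= esym andbAC. Qed.

Implicit Types (f : placement T c) (x y : T).
Definition swp (f : placement T c) (x y : T) : placement T c :=
  [ffun z => f (tperm x y z)].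

Lemma swp_same f x y : f x = f y -> swp f x y = f.
Proof. by move=> h; apply/ffunP => z; rewrite ffunE; case: tpermP => // ->. Qed.

Lemma swp_tp f x y : token_placement f -> token_placement (swp f x y).
Proof.
move=> /forallP H; apply/forallP => i; have /existsP[w /eqP <-] := H i.
by apply/existsP; exists (tperm x y w); rewrite ffunE tpermK.
Qed.

Lemma swp_count f x y (A : {set T}) i : x \in A -> y \in A ->
  #|[set z in A | swp f x y z == i]| = #|[set z in A | f z == i]|.
Proof.
move=> xA yA; rewrite -(card_preimset _ (@perm_inj _ (tperm x y))).
apply: eq_card => z; rewrite !inE ffunE; congr (_ && _).
  by case: tpermP => // ->; rewrite ?xA ?yA.
by rewrite tpermK.
Qed.

Lemma swp_adj f x y : e x y -> f x != f y -> swap_adj e f (swp f x y).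
Proof.
move=> exy fxy; apply/andP; split.
  apply/negP => /eqP /ffunP /(_ x); rewrite ffunE tpermL => h.
  by rewrite h eqxx in fxy.
apply/existsP; exists x; apply/existsP; exists y.
rewrite exy !ffunE tpermL tpermR !eqxx /=; apply/forallP => w.
apply/implyP => /andP[wx wy]; rewrite ffunE tpermD // eq_sym //.
Qed.

Lemma seq_cat f f1 f2 s1 s2 : swapping_seq e f f1 s1 -> swapping_seq e f1 f2 s2 ->
  swapping_seq e f f2 (s1 ++ s2).
Proof.
move=> [a1 p1 l1] [a2 p2 l2]; split.
- by rewrite -cat_cons all_cat a1 /=; move: a2 => /andP[].
- by rewrite cat_path p1 l1.
- by rewrite last_cat l1.
Qed.

Lemma move S f x p : path (eS S) x p -> token_placement f ->
  exists s f1, [/\ swapping_seq e f f1 s, size s <= size p, f1 (last x p) = f x,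
    (forall z, z \notin x :: p -> f1 z = f z) &
    forall (A : {set T}), {subset x :: p <= A} -> forall i,
      #|[set z in A | f1 z == i]| = #|[set z in A | f z == i]| ].
Proof.
elim: p x f => [|y p IH] x f /=.
  move=> _ tf; exists [::], f; split => //; by rewrite /swapping_seq /= tf.
move=> /andP[/andP[/andP[exy xS] yS] pp] tf.
have [s [f1 [sq sz l fz cnt]]] := IH y (swp f x y) pp (swp_tp x y tf).
have gy : swp f x y y = f x by rewrite ffunE tpermR.
have gz : forall z, z != x -> z != y -> swp f x y z = f z.
  by move=> z zx zy; rewrite ffunE tpermD // eq_sym.
have cntA : forall (A : {set T}), {subset x :: y :: p <= A} -> forall i,
      #|[set z in A | f1 z == i]| = #|[set z in A | f z == i]|.
  move=> A sub i; rewrite cnt; last by move=> z zi; apply: sub; rewrite inE zi orbT.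
  by apply: swp_count; apply: sub; rewrite !inE eqxx ?orbT.
have fzz : forall z, z \notin x :: y :: p -> f1 z = f z.
  move=> z; rewrite !inE negb_or => /andP[zx zyp]; rewrite fz //.
  by apply: gz => //; move: zyp; rewrite negb_or => /andP[].
case: (eqVneq (f x) (f y)) => fxy.
  move: sq l; rewrite swp_same // => sq l.
  exists s, f1; split => //; first by apply: leqW.
  by rewrite l -fxy.
exists (swp f x y :: s), f1; split => //.
- case: sq => a1 p1 l1; split => //=.
  + by rewrite tf.
  + by rewrite p1 swp_adj.
- by rewrite l gy.
Qed.


Implicit Types (S : {set T}) (u z : T).
Lemma path_in S x p : path (eS S) x p -> all (mem S) p.
Proof. by elim: p x => //= y p IH x /andP[/andP[/andP[_ _] yS] /IH ->]; rewrite yS. Qed.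

Lemma conn_in S u z : u \in S -> connect (eS S) u z -> z \in S.
Proof.
move=> uS /connectP[p pp ->]; have := mem_last u p; rewrite inE => /orP[/eqP->//|].
by move/(allP (path_in pp)).
Qed.

Lemma conn_out S u z : u \notin S -> connect (eS S) u z = (z == u).
Proof.
move=> uS; apply/idP/idP; last by move/eqP->; exact: connect0.
by move/connectP=> [[|y p] /= pp ->] //; move: pp; rewrite (negbTE uS) andbF.
Qed.

Variable ft : placement T c.

Definition Inv S f := forall u i,
  #|[set z | connect (eS S) u z & f z == i]| = #|[set z | connect (eS S) u z & ft z == i]|.

Lemma card_out S u (g : placement T c) i : u \notin S ->
  #|[set z | connect (eS S) u z & g z == i]| = (g u == i).
Proof.
move=> uS.
have -> : [set z | connect (eS S) u z & g z == i] = if g u == i then [set u] else set0.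
  apply/setP => z; rewrite !inE conn_out //.
  by case: (eqVneq z u) => [->|zu]; case: (g u == i); rewrite ?inE ?eqxx ?(negbTE zu).
case E: (g u == i).
  exact: cards1.
exact: cards0.
Qed.

Lemma inv_out S f u : Inv S f -> u \notin S -> f u = ft u.
Proof.
move=> /(_ u (f u)) H uS; move: H; rewrite !card_out // eqxx.
by case: eqP.
Qed.

Lemma RmE S v : Rm (eS S) v =2 eS (S :\ v).
Proof. by move=> x y; rewrite /= !inE; do 2! case: (_ != v); rewrite ?andbF ?andbT. Qed.

Lemma tp_last f f1 s : swapping_seq e f f1 s -> token_placement f1.
Proof. by case=> a _ <-; apply: (allP a); apply: mem_last. Qed.

Lemma mainL n : forall S f, #|S| = n -> token_placement f -> Inv S f ->
  exists s, swapping_seq e f ft s /\ size s <= 'C(n, 2).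
Proof.
elim: n => [|n IHn] S f cS tf inv.
  have S0 : S = set0 by apply/eqP; rewrite -cards_eq0 cS.
  have -> : f = ft by apply/ffunP => u; apply: (inv_out inv); rewrite S0 inE.
  by exists [::]; split => //; split => //=; rewrite andbT; rewrite -(_ : f = ft) //; apply/ffunP => u; apply: (inv_out inv); rewrite S0 inE.
have [r rS] : exists r, r \in S by apply/set0Pn; rewrite -cards_eq0 cS.
set R := eS S.
have Rsym : connect_sym R by apply: sym_connect_sym; apply: eS_sym.
have [v [rv hv]] := noncut R r.
have vS : v \in S by apply: conn_in rv.
have [x /andP[rx fxv]] : exists x, connect R r x && (f x == ft v).
  have := inv r (ft v); move/eqP; rewrite eq_sym => /eqP H.
  have : 0 < #|[set z | connect R r z & ft z == ft v]|.
    by apply/card_gt0P; exists v; rewrite inE rv eqxx.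
  by rewrite H => /card_gt0P[x]; rewrite inE => hx; exists x.
have xv : connect R x v by apply: connect_trans rv; rewrite Rsym.
move/connectP: xv => [p0 pp0]; case: (shortenP pp0) => p pp up _ lv.
set K := [set z | connect R r z].
have subK : {subset x :: p <= K}.
  by move=> z /(path_connect pp) xz; rewrite inE (connect_trans rx xz).
have szp : size p <= n.
  have h1 : size (x :: p) <= #|K|.
    by rewrite cardE; apply: uniq_leq_size => // z /subK; rewrite mem_enum.
  have h2 : #|K| <= #|S|.
    by apply: subset_leq_card; apply/subsetP => z; rewrite inE; apply: conn_in.
  by move: (leq_trans h1 h2); rewrite cS.
have [s1 [f1 [sq1 sz1 l1 fz1 cnt1]]] := move pp tf.
have f1v : f1 v = ft v by rewrite {1}lv l1 (eqP fxv).
have cS' : #|S :\ v| = n by move: cS; rewrite (cardsD1 v) vS => -[].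
have inv' : Inv (S :\ v) f1.
  move=> u i.
  have KS : forall z, z \in K -> z \in S by move=> z; rewrite inE; apply: conn_in.
  have subR : subrel (eS (S :\ v)) (connect R).
    by move=> a b; rewrite /= !inE => /andP[/andP[ab /andP[_ aS]] /andP[_ bS]]; apply: connect1; rewrite /= ab aS bS.
  case: (boolP (u \in S :\ v)) => uS'; last first.
    have f1u : f1 u = ft u.
      case: (eqVneq u v) => [->//|uv].
      have uS : u \notin S by move: uS'; rewrite !inE uv.
      rewrite fz1; first exact: (inv_out inv uS).
      by apply/negP => /subK /KS; rewrite (negbTE uS).
    by rewrite !card_out // f1u.
  have [uv uS] := setD1P uS'.
  case: (boolP (connect R r u)) => ru.
    have cE : forall z, connect (eS (S :\ v)) u z = (z \in K) && (z != v).
      move=> z; apply/idP/andP => [uz|[zK zv]].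
        split; first by rewrite inE (connect_trans ru) // (connect_sub subR uz).
        by case/setD1P: (conn_in uS' uz).
      have rz : connect (Rm R v) r z by apply: hv zv; move: zK; rewrite inE.
      have ru' := hv u ru uv.
      rewrite (eq_connect (RmE S v)) in rz.
      rewrite (eq_connect (RmE S v)) in ru'.
      apply: connect_trans _ rz; rewrite (sym_connect_sym (eS_sym (S :\ v))) //.
    set A1 := [set z in K | f1 z == i]; set A2 := [set z in K | ft z == i].
    have e1 : #|[set z | connect (eS (S :\ v)) u z & f1 z == i]| = #|A1 :\ v|.
      by apply: eq_card => w; rewrite inE cE !inE; case: (w == v); case: (connect R r w).
    have e2 : #|[set z | connect (eS (S :\ v)) u z & ft z == i]| = #|A2 :\ v|.
      by apply: eq_card => w; rewrite inE cE !inE; case: (w == v); case: (connect R r w).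
    rewrite e1 e2.
    have c12 : #|A1| = #|A2|.
      rewrite /A1 (cnt1 K subK) /A2.
      have := inv r i; rewrite (_ : [set z | connect (eS S) r z & f z == i] = [set z in K | f z == i]); last by apply/setP => z; rewrite !inE.
      by rewrite (_ : [set z | connect (eS S) r z & ft z == i] = [set z in K | ft z == i]) //; apply/setP => z; rewrite !inE.
    have v12 : (v \in A1) = (v \in A2) by rewrite !inE f1v.
    by move: c12; rewrite (cardsD1 v A1) (cardsD1 v A2) v12 => /eqP; rewrite eqn_add2l => /eqP.
  have cE : forall z, connect (eS (S :\ v)) u z = connect R u z.
    move=> z; apply/idP/idP => [uz|]; first exact: (connect_sub subR uz).
    move/connectP=> [q pq ->]; apply/connectP; exists q => //.
    have allq : all (connect R u) (u :: q) by apply/allP => w /(path_connect pq).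
    move: pq; apply: (@sub_in_path _ (connect R u)) allq.
    move=> a b ua ub /=; rewrite !inE => /andP[/andP[ab aS] bS].
    have nv w : connect R u w -> w != v.
      apply: contraTneq => ->; apply/negP => uv'; move/negP: ru; apply.
      by apply: connect_trans rv _; rewrite Rsym.
    by rewrite ab aS bS nv // nv.
  have f1E : forall z, connect R u z -> f1 z = f z.
    move=> z uz; apply: fz1; apply/negP => /subK; rewrite inE => rz; move/negP: ru; apply.
    by apply: connect_trans rz _; rewrite Rsym.
  have := inv u i; rewrite (_ : [set z | connect (eS S) u z & f z == i] = [set z | connect (eS (S :\ v)) u z & f1 z == i]).
    by rewrite (_ : [set z | connect (eS S) u z & ft z == i] = [set z | connect (eS (S :\ v)) u z & ft z == i]) //; apply/setP => z; rewrite !inE cE.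
  apply/setP => z; rewrite !inE cE; case uz: (connect R u z) => //=; by rewrite f1E.
have [s2 [sq2 sz2]] := IHn _ _ cS' (tp_last sq1) inv'.
exists (s1 ++ s2); split; first exact: seq_cat sq1 sq2.
rewrite size_cat binS bin1 addnC; apply: leq_add => //.
by apply: leq_trans sz1 szp.
Qed.

End Move.

Theorem mainTheorem1 (T : finType) (e : rel T) (c : nat)
    (f0 ft : placement T c) :
  simple_graph e ->
  token_placement f0 -> token_placement ft ->
  @same_comp_counts T e c f0 ft ->
  @OPT_le T e c f0 ft 'C(#|T|, 2).
Proof.
move=> [esym _] t0 _ sc.
have EE : eS e setT =2 e by move=> x y; rewrite /= !inE !andbT.
have inv : Inv e ft setT f0.
  move=> u i; rewrite (_ : [set z | connect (eS e setT) u z & f0 z == i] = [set z | connect e u z & f0 z == i]).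
    rewrite (_ : [set z | connect (eS e setT) u z & ft z == i] = [set z | connect e u z & ft z == i]) //.
    by apply/setP => z; rewrite !inE (eq_connect EE).
  by apply/setP => z; rewrite !inE (eq_connect EE).
have [s [sq sz]] := mainL esym (cardsT T) t0 inv.
by exists s.
Qed.
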